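(* Let $p,q$ be positive integers with $1<q<p-q$ and $\gcd(p,q)=1$, let $A=\langle q,p-q\rangle\subseteq\mathbb{Z}^+$, let $s\in A\setminus\{0\}$, and let $r$ be a positive integer with $1<r<s-r$ and $\gcd(r,s)=1$; put $B=\langle r,s-r\rangle$. Let $M$ be the submonoid of $\mathbb{Q}^+$ generated by all fractions $k/r$ with $k\in A$ and all fractions $\frac{k'}{r}\left(\frac{s}{r}\right)^n$ with $k'\in B$ and $n\ge 1$, and let $G=M+(-M)$ with positive cone $G^+=M$. For $n\ge1$ let $e_n=(s/r)^n$. Then the set $D=\{x\in G^+ : x\le_G e_n \text{ for some } n\}$ is an interval in $G^+$, $D\neq G^+$, and $rD=G^+$.
   Context: $\langle a_1,\dots,a_k\rangle$ denotes the submonoid of $\mathbb{Z}^+$ generated by $a_1,\dots,a_k$. For a partially ordered abelian group $(G,G^+)$, $x\le_G y$ means $y-x\in G^+$. An interval in $G^+$ is a nonempty subset $X\subseteq G^+$ which is upward directed (any two elements have a common upper bound in $X$) and order-hereditary ($0\le y\le x\in X$ implies $y\in X$). The sum of intervals is $X+Y=\{z\in G^+: z\le x+y\text{ for some }x\in X,y\in Y\}$, and for a positive integer $t$, $tX$ denotes the $t$-fold sum $X+\cdots+X$. *)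

(* Defs.v *)
(* G is realized as a subgroup of the rationals [rat]. *)
From mathcomp Require Import all_boot all_order all_algebra.
Set Implicit Arguments. Unset Strict Implicit. Unset Printing Implicit Defensive.
Import Order.TTheory GRing.Theory Num.Theory.
Local Open Scope ring_scope.

Definition in_monoid2 (a b k : nat) : Prop :=
  exists i j : nat, k = (i * a + j * b)%N.

Definition M_gen (p q r s : nat) (x : rat) : Prop :=
  (exists k : nat, in_monoid2 q (p - q) k /\ x = k%:R / r%:R) \/
  (exists (k' n : nat), in_monoid2 r (s - r) k' /\ (0 < n)%N /\
       x = k'%:R / r%:R * (s%:R / r%:R) ^+ n).

Inductive inM (p q r s : nat) : rat -> Prop :=
  | inM0 : inM p q r s 0
  | inM_add : forall x y, M_gen p q r s x -> inM p q r s y -> inM p q r s (x + y).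

Definition leG (P : rat -> Prop) (x y : rat) : Prop := P (y - x).

Definition is_interval (P X : rat -> Prop) : Prop :=
  (exists x, X x) /\
  (forall x, X x -> P x) /\
  (forall x y, X x -> X y -> exists z, X z /\ leG P x z /\ leG P y z) /\
  (forall x y, leG P 0 y -> leG P y x -> X x -> X y).

Definition int_sum (P X Y : rat -> Prop) (z : rat) : Prop :=
  P z /\ exists x y, X x /\ Y y /\ leG P z (x + y).

Fixpoint int_mul (P X : rat -> Prop) (t : nat) : rat -> Prop :=
  match t with
  | 0%N => X
  | 1%N => X
  | t'.+1 => int_sum P X (int_mul P X t')
  end.

(* Main.v *)
Require Import Defs.
From mathcomp Require Import all_boot all_order all_algebra.
From mathcomp Require Import ring lra zify.
Import Order.TTheory GRing.Theory Num.Theory.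
Local Open Scope ring_scope.

Lemma mon0 a b : in_monoid2 a b 0.
Proof. by exists 0%N, 0%N. Qed.
Lemma monD a b x y : in_monoid2 a b x -> in_monoid2 a b y -> in_monoid2 a b (x + y).
Proof. move=> [i [j ->]] [i' [j' ->]]; exists (i + i')%N, (j + j')%N; lia. Qed.
Lemma monM a b c x : in_monoid2 a b x -> in_monoid2 a b (c * x).
Proof. move=> [i [j ->]]; exists (c * i)%N, (c * j)%N; lia. Qed.
Lemma monl a b : in_monoid2 a b a.
Proof. by exists 1%N, 0%N; lia. Qed.
Lemma monr a b : in_monoid2 a b b.
Proof. by exists 0%N, 1%N; lia. Qed.

Definition ee (r s n : nat) : rat := (s%:R / r%:R) ^+ n.

Lemma inM_addM p q r s x y : inM p q r s x -> inM p q r s y -> inM p q r s (x + y).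
Proof. elim=> [|x1 y1 g _ IH] hy; first by rewrite add0r. rewrite -addrA; apply: inM_add g (IH hy). Qed.

Lemma inM_g p q r s x : M_gen p q r s x -> inM p q r s x.
Proof. move=> g; rewrite -[x]addr0; apply: inM_add => //; exact: inM0. Qed.

Lemma gen_ge0 p q r s x : M_gen p q r s x -> 0 <= x.
Proof.
case=> [[k [_ ->]]|[k [n [_ [_ ->]]]]].
  by rewrite divr_ge0 ?ler0n.
by rewrite mulr_ge0 ?divr_ge0 ?ler0n // exprn_ge0 // divr_ge0 ?ler0n.
Qed.

Lemma inM_ge0 p q r s x : inM p q r s x -> 0 <= x.
Proof. elim=> // x1 y1 g _ IH; rewrite addr_ge0 //; exact: gen_ge0 g. Qed.

Lemma genA p q r s k : in_monoid2 q (p - q) k -> inM p q r s (k%:R / r%:R).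
Proof. by move=> h; apply: inM_g; left; exists k. Qed.

Lemma genB p q r s k n : in_monoid2 r (s - r) k -> (0 < n)%N ->
  inM p q r s (k%:R / r%:R * ee r s n).
Proof. by move=> h hn; apply: inM_g; right; exists k, n. Qed.

Lemma inM_natM p q r s c x : inM p q r s x -> inM p q r s (c%:R * x).
Proof.
move=> h; elim: c => [|c IH]; first by rewrite mul0r; exact: inM0.
by rewrite mulrSr mulrDl mul1r; apply: inM_addM.
Qed.

Lemma leG_trans P x y z : (forall a b, P a -> P b -> P (a + b)) ->
  leG P x y -> leG P y z -> leG P x z.
Proof. move=> hadd h1 h2; rewrite /leG. have -> : z - x = (z - y) + (y - x) by ring. exact: hadd. Qed.

Lemma Rneq0 (r : nat) : (0 < r)%N -> (r%:R : rat) != 0.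
Proof. by rewrite pnatr_eq0 -lt0n. Qed.

Section E.
Variables (p q r s : nat).
Hypothesis r0 : (0 < r)%N.
Hypothesis rs : (r < s - r)%N.
Local Notation M := (inM p q r s).
Local Notation R := (r%:R : rat).
Local Notation e := (ee r s).

Lemma Bs_r : in_monoid2 r (s - r) (s - r). Proof. exact: monr. Qed.

Lemma e_step n : (0 < n)%N -> M (e n.+1 - e n).
Proof.
move=> hn; have -> : e n.+1 - e n = (s - r)%:R / R * e n.
  rewrite /ee exprS natrB; last by lia.
  set X := (_ ^+ n); field; exact: Rneq0.
exact: genB (monr _ _) hn.
Qed.

Lemma e_mono n m : (0 < n)%N -> (n <= m)%N -> M (e m - e n).
Proof.
move=> hn; elim: m => [|m IH] hm; first by lia.
case: (ltngtP n m.+1) => h; first 1 last; [lia| by rewrite h subrr; exact: inM0|].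
have -> : e m.+1 - e n = (e m.+1 - e m) + (e m - e n) by ring.
apply: inM_addM; [apply: e_step; lia | apply: IH; lia].
Qed.

Lemma e_in n : (0 < n)%N -> M (e n).
Proof.
move=> hn; have -> : e n = r%:R / R * e n by field; exact: Rneq0.
apply: genB => //; exact: monl.
Qed.

Lemma Re_in n : (0 < n)%N -> M (R * e n).
Proof.
move=> hn; have -> : R * e n = (r * r)%:R / R * e n.
  by rewrite natrM; field; exact: Rneq0.
apply: genB => //; apply: monM; exact: monl.
Qed.

Lemma Re_double n : (0 < n)%N -> M (R * e n.+1 - 2%:R * (R * e n)).
Proof.
move=> hn; have -> : R * e n.+1 - 2%:R * (R * e n) = (r * (s - 2 * r))%:R / R * e n.
  rewrite /ee exprS natrM natrB; last by lia.
  rewrite natrM; set X := (_ ^+ n); field; exact: Rneq0.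
apply: genB hn; exists (s - 2 * r)%N, 0%N; lia.
Qed.

Definition bounded x := exists N, (0 < N)%N /\ M (R * e N - x).

Lemma bounded_le x y : bounded y -> M (y - x) -> bounded x.
Proof.
move=> [N [hN h]] hxy; exists N; split => //.
have -> : R * e N - x = (R * e N - y) + (y - x) by ring.
exact: inM_addM.
Qed.

Lemma bounded_Re n : (0 < n)%N -> bounded (R * e n).
Proof. by move=> hn; exists n; rewrite subrr; split => //; exact: inM0. Qed.

Lemma bounded_add x y : bounded x -> bounded y -> bounded (x + y).
Proof.
move=> [N1 [h1 hx]] [N2 [h2 hy]]; exists (N1 + N2).+1; split => //.
have -> : R * e (N1 + N2).+1 - (x + y) =
  (R * e (N1 + N2).+1 - 2%:R * (R * e (N1 + N2))) +
  ((R * (e (N1 + N2) - e N1) + R * (e (N1 + N2) - e N2)) +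
  ((R * e N1 - x) + (R * e N2 - y))) by ring.
apply: inM_addM; first by apply: Re_double; lia.
apply: inM_addM; last exact: inM_addM.
by apply: inM_addM; apply: inM_natM; apply: e_mono; lia.
Qed.

Lemma bounded_natM c n : (0 < n)%N -> bounded (c%:R * (R * e n)).
Proof.
move=> hn; elim: c => [|c IH].
  rewrite mul0r; apply: (@bounded_le _ (R * e n)); first exact: bounded_Re.
  rewrite subr0; exact: Re_in.
by rewrite mulrSr mulrDl mul1r; apply: bounded_add => //; exact: bounded_Re.
Qed.

Lemma bounded_gen x : M_gen p q r s x -> bounded x.
Proof.
case=> [[k [hk ->]]|[k [n [hk [hn ->]]]]].
  apply: (@bounded_le _ (k%:R * (R * e 1))); first exact: bounded_natM.
  have -> : k%:R * (R * e 1) - k%:R / R = (k * (r * s - 1))%:R / R.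
    rewrite /ee expr1 natrM natrB; last by nia.
    rewrite natrM; field; exact: Rneq0.
  apply: genA; rewrite mulnC; exact: monM.
apply: (@bounded_le _ (k%:R * (R * e n))); first exact: bounded_natM.
have -> : k%:R * (R * e n) - k%:R / R * e n = (k * (r * r - 1))%:R / R * e n.
  rewrite natrM natrB; last by nia.
  rewrite natrM; field; exact: Rneq0.
apply: genB => //; rewrite mulnC; exact: monM.
Qed.

Lemma bounded_M x : M x -> bounded x.
Proof.
elim=> [|x1 y1 g _ IH]; first by apply: (@bounded_le _ (R * e 1)); [exact: bounded_Re | rewrite subr0; exact: Re_in].
apply: bounded_add => //; exact: bounded_gen.
Qed.
End E.

Section N.
Variables (p q r s : nat).
Hypothesis r1 : (1 < r)%N.
Hypothesis rs : (r < s - r)%N.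
Hypothesis crs : coprime r s.
Local Notation M := (inM p q r s).
Local Notation R := (r%:R : rat).
Local Notation S := (s%:R : rat).
Local Notation e := (ee r s).

Let r0 : (0 < r)%N. Proof. lia. Qed.
Let Rn0 : R != 0. Proof. exact: Rneq0. Qed.
Let RXn0 k : R ^+ k != 0. Proof. exact: expf_neq0. Qed.

Definition Pn n m := e n.+2 <= m \/ exists b K m', in_monoid2 r (s - r) b /\ M m' /\
  m' * R ^+ n.+1 = K%:R /\ m = b%:R * S ^+ n.+1 / R ^+ n.+2 + m'.

Lemma P0 n : Pn n 0.
Proof. right; exists 0%N, 0%N, 0; split; [exact: mon0|split; [exact: inM0|]]. by rewrite !mul0r addr0. Qed.

Lemma P_gen n x : M_gen p q r s x -> Pn n x.
Proof.
case=> [[k [hk ->]]|[k [j [hk [hj ->]]]]].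
  right; exists 0%N, (k * r ^ n)%N, (k%:R / R); split; first exact: mon0.
  split; first exact: genA.
  split; last by rewrite mul0r mul0r add0r.
  rewrite natrM natrX exprS; field; exact: Rn0.
case: (ltngtP j n.+1) => hjn.
- right; exists 0%N, (k * s ^ j * r ^ (n - j))%N, (k%:R / R * e j); split; first exact: mon0.
  split; first exact: genB.
  split; last by rewrite mul0r mul0r add0r.
  have -> : R ^+ n.+1 = R ^+ j * R ^+ (n - j) * R by rewrite -exprD -exprSr; congr (_ ^+ _); lia.
  rewrite !natrM !natrX /ee expr_div_n; field; by rewrite Rn0 RXn0.
- have [->|knz] := eqVneq k 0%N.
    rewrite mul0r mul0r; exact: P0.
  left; apply: (le_trans (y := e j)).
    rewrite -subr_ge0; apply: (@inM_ge0 p q r s); apply: e_mono; lia.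
  apply: ler_peMl; first by apply: (@inM_ge0 p q r s); apply: e_in; lia.
  rewrite ler_pdivlMr ?ltr0n // mul1r ler_nat.
  move: hk knz => [i [i' ->]] knz.
  case: i knz => [|i] knz; last by nia.
  case: i' knz => [|i'] knz; [by rewrite mul0n in knz|nia].
- right; exists k, 0%N, 0; split => //; split; first exact: inM0.
  split; first by rewrite mul0r.
  rewrite addr0 hjn /ee expr_div_n [R ^+ n.+2]exprS. field; by rewrite Rn0 RXn0.
Qed.

Lemma P_add n x y : M x -> M y -> Pn n x -> Pn n y -> Pn n (x + y).
Proof.
move=> mx my [hx|[b1 [K1 [m1 [hb1 [hm1 [hK1 ex]]]]]]].
  move=> _; left; apply: (le_trans hx); rewrite lerDl; exact: (inM_ge0 _ _ _ _ _ my).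
case=> [hy|[b2 [K2 [m2 [hb2 [hm2 [hK2 ey]]]]]]].
  left; apply: (le_trans hy); rewrite lerDr; exact: (inM_ge0 _ _ _ _ _ mx).
right; exists (b1 + b2)%N, (K1 + K2)%N, (m1 + m2); split; first exact: monD.
split; first exact: inM_addM.
split; first by rewrite mulrDl hK1 hK2 natrD.
rewrite ex ey natrD; ring.
Qed.

Lemma P_M n x : M x -> Pn n x.
Proof.
move=> h; elim: h => [|x1 y1 g hy IH]; first exact: P0.
apply: P_add => //; [exact: inM_g|exact: P_gen].
Qed.

Lemma step n : M (e n.+2 - S) -> M (e n.+1 - S).
Proof.
move=> h; have s0 : (0 < s)%N by lia.
case: (@P_M n _ h) => [hle|[b [K [m' [hb [hm' [hK heq]]]]]]].
  have : S <= 0 by move: hle; set E := e n.+2; lra.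
  by rewrite leNgt ltr0n s0.
have E : S * S ^+ n.+1 = S * (R * R ^+ n.+1) + b%:R * S ^+ n.+1 + K%:R * R.
  apply/eqP; rewrite -subr_eq0; apply/eqP.
  have -> : S * S ^+ n.+1 - (S * (R * R ^+ n.+1) + b%:R * S ^+ n.+1 + K%:R * R)
     = ((e n.+2 - S) - (b%:R * S ^+ n.+1 / R ^+ n.+2 + m')) * (R * R ^+ n.+1).
    rewrite -hK /ee expr_div_n !exprS; field; by rewrite Rn0 RXn0.
  by rewrite heq subrr mul0r.
have hnat : (s * s ^ n.+1 = s * (r * r ^ n.+1) + b * s ^ n.+1 + K * r)%N.
  apply/eqP; rewrite -(eqr_nat rat) !natrD !natrM !natrX; exact/eqP.
set X := (s ^ n.+1)%N in hnat; set Y := (r ^ n.+1)%N in hnat.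
have X0 : (0 < X)%N by rewrite expn_gt0 s0.
have Y0 : (0 < Y)%N by rewrite expn_gt0 r0.
have bs : (b < s)%N.
  have : (b * X < s * X)%N by nia.
  by rewrite ltn_pmul2r.
move: hb => [i [j hb]].
have j1 : (j <= 1)%N by nia.
have hb' : b = (s - r)%N.
  case: j hb j1 => [|[|j]] hb j1; last by lia.
  - exfalso; have : (r %| s ^ n.+2)%N.
      apply/dvdnP; exists (s * Y + i * X + K)%N; rewrite expnS -/X hnat hb; ring.
    have cX : coprime r (s ^ n.+2) by exact: coprimeXr.
    move=> d; move: cX; rewrite /coprime => /eqP cX.
    have : (r %| gcdn r (s ^ n.+2))%N by rewrite dvdn_gcd dvdnn d.
    by rewrite cX dvdn1 => /eqP r_1; lia.
  - rewrite mul1n in hb; case: i hb => [|i] hb; first lia.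
    have : (r <= i.+1 * r)%N by rewrite leq_pmull.
    lia.
have -> : e n.+1 - S = m'.
  have -> : m' = (e n.+2 - S) - b%:R * S ^+ n.+1 / R ^+ n.+2 by rewrite heq; ring.
  rewrite hb' natrB; last by lia.
  rewrite /ee !expr_div_n !exprS; field; by rewrite Rn0 RXn0.
exact: hm'.
Qed.

Lemma notD n : (0 < n)%N -> ~ M (e n - S).
Proof.
elim: n => [|[|n] IH] // _.
  move=> /inM_ge0; rewrite /ee expr1 => h.
  have u0 : 0 < S / R by rewrite divr_gt0 // ltr0n; lia.
  have hR : 1 < R by rewrite ltr1n.
  have t0 : 0 < S / R * (R - 1) by rewrite mulr_gt0 // subr_gt0.
  have te : S / R * (R - 1) = S - S / R by field.
  move: t0 h; rewrite te; set u := S / R; lra.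
move=> h; apply: IH => //; exact: step.
Qed.
End N.

Lemma int_mul_P P X t x : (1 < t)%N -> int_mul P X t x -> P x.
Proof. by case: t => [|[|t]] //= _ []. Qed.

Theorem lemma2p2 (p q r s : nat) :
  (1 < q)%N -> (q < p - q)%N -> coprime p q ->
  in_monoid2 q (p - q) s -> s <> 0%N ->
  (1 < r)%N -> (r < s - r)%N -> coprime r s ->
  let M := inM p q r s in
  let e := fun n : nat => ((s%:R / r%:R : rat) ^+ n) in
  let D := fun x : rat => M x /\ exists n : nat, (0 < n)%N /\ leG M x (e n) in
  is_interval M D /\
  ~ (forall x, D x <-> M x) /\
  (forall x, int_mul M D r x <-> M x).
Proof.
move=> hq hqp cpq hsA s0 r1 rs crs M e D.
have r0 : (0 < r)%N by lia.
have Madd : forall a b, M a -> M b -> M (a + b) by move=> a b; exact: inM_addM.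
have eM : forall n, (0 < n)%N -> M (e n) by move=> n hn; exact: e_in.
have emono : forall n m, (0 < n)%N -> (n <= m)%N -> leG M (e n) (e m).
  by move=> n m hn hnm; rewrite /leG; exact: e_mono.
have Dn : forall n, (0 < n)%N -> D (e n).
  move=> n hn; split; first exact: eM.
  by exists n; split => //; rewrite /leG subrr; exact: inM0.
split; [|split].
- split; first by exists (e 1); exact: Dn.
  split; first by move=> x [].
  split.
    move=> x y [mx [n [hn hx]]] [my [m [hm hy]]]; exists (e (n + m)).
    split; first by apply: Dn; lia.
    split; [apply: leG_trans Madd hx _; apply: emono; lia
           |apply: leG_trans Madd hy _; apply: emono; lia].
  move=> x y h0 hyx [mx [n [hn hx]]]; split.
    by move: h0; rewrite /leG subr0.
  exists n; split => //; exact: leG_trans Madd hyx hx.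
- move=> H.
  have : D (s%:R).
    apply/H; have -> : (s%:R : rat) = (r * s)%:R / r%:R.
      rewrite natrM; field; exact: Rneq0.
    apply: genA; exact: monM.
  move=> [_ [n [hn h]]]; exact: (@notD p q r s r1 rs crs n hn h).
- have key : forall t y, M y -> (exists N, (0 < N)%N /\ M (t.+1%:R * e N - y)) ->
     int_mul M D t.+1 y.
    elim=> [|t IH] y my [N [hN h]].
      split => //; exists N; split => //; by rewrite mul1r in h.
    split => //; exists (e N), (t.+1%:R * e N); split; first exact: Dn.
    split.
      apply: IH; first by rewrite /M; apply: inM_natM; exact: eM.
      by exists N; split => //; rewrite subrr; exact: inM0.
    rewrite /leG; have -> : e N + t.+1%:R * e N = t.+2%:R * e N.
      by rewrite [X in _ = X * _]mulrS mulrDl mul1r.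
    exact: h.
  move=> x; split; first exact: int_mul_P.
  move=> mx; have [N [hN h]] := @bounded_M p q r s r0 rs x mx.
  rewrite -(prednK r0); apply: key => //; exists N; split => //.
  by rewrite prednK.
Qed.
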